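(* Let $|h|^2$ be a nonnegative random variable with continuous, strictly increasing (on its support) cumulative distribution function $F$ and inverse $F^{-1}$. Fix $A>1$ and $\mathrm{SNR}>0$, and let $\lambda>0$ with $\lambda A\,\mathrm{SNR}<1$ be the Lagrange multiplier determined by $$\mathrm{SNR}=\mathbf{E}\left[\min\left\{\left[\frac{1}{\lambda}-\frac{1}{|h|^2}\right]^+,\ A\,\mathrm{SNR}\right\}\right].$$ Then (1) $$\frac{F^{-1}(1-\frac{1}{A})}{1+A\,\mathrm{SNR}\,F^{-1}(1-\frac{1}{A})}\le \lambda\le F^{-1}\left(1-\frac{1}{A}\right);$$ (2) as $\mathrm{SNR}\to 0$, $\lambda\to F^{-1}(1-\frac1A)$; (3) for every constant $n>0$, $\lambda^n\,\mathrm{SNR}\to 0$ as $\mathrm{SNR}\to0$.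
   Context: $[u]^+=\max\{0,u\}$. The quantity $\min\{[1/\lambda-1/|h|^2]^+, A\,\mathrm{SNR}\}$ is the optimal power allocation for a flat-fading channel $y=hx+v$, $v\sim\mathcal{CN}(0,1)$, with perfect channel state information at transmitter and receiver, under average power constraint $\mathbf{E}[P(h)]\le\mathrm{SNR}$ and peak power constraint $\max_h P(h)\le A\,\mathrm{SNR}$; $A$ is the peak-to-average power ratio (PAPR). *)

(* Defs.v *)
From Stdlib Require Import Reals Lra.
Open Scope R_scope.

Definition pos_part (u : R) : R := Rmax 0 u.

(* Optimal power allocation  min{[1/lam - 1/|h|^2]^+, A*SNR}  at gain x = |h|^2. *)
Definition power_alloc (lam A SNR x : R) : R :=
  Rmin (pos_part (/ lam - / x)) (A * SNR).

(* F is the CDF of a nonnegative random variable, continuous, and strictly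
   increasing on its support (the region where 0 < F < 1). *)
Definition nonneg_cdf (F : R -> R) : Prop :=
  (forall x y, x <= y -> F x <= F y) /\
  (forall x, x < 0 -> F x = 0) /\
  (forall eps, 0 < eps -> exists M, forall x, M <= x -> 1 - eps < F x) /\
  continuity F /\
  (forall x y, x < y -> 0 < F y -> F x < 1 -> F x < F y).

Definition is_cdf_inverse (F Finv : R -> R) : Prop :=
  forall u, 0 < u < 1 -> F (Finv u) = u.

(* E[g(|h|^2)] = v, computed through the quantile representation
   |h|^2 =d Finv(U), U uniform on [0,1]:  E[g(|h|^2)] = int_0^1 g(Finv u) du. *)
Definition expectation_is (Finv g : R -> R) (v : R) : Prop :=
  exists pr : Riemann_integrable (fun u => g (Finv u)) 0 1, RiemannInt pr = v.

Definition is_multiplier (Finv : R -> R) (A SNR lam : R) : Prop :=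
  0 < lam /\ lam * A * SNR < 1 /\
  expectation_is Finv (power_alloc lam A SNR) SNR.

Definition lim_0_right (f : R -> R) (l : R) : Prop :=
  forall eps, 0 < eps -> exists delta, 0 < delta /\
    forall s, 0 < s < delta -> Rabs (f s - l) < eps.

(* Main.v *)
Require Import Defs.
From Stdlib Require Import Reals Lra.
Open Scope R_scope.

Lemma int_lower f (pr : Riemann_integrable f 0 1) u0 m :
  0 <= u0 <= 1 -> (forall u, 0 < u < 1 -> 0 <= f u) ->
  (forall u, u0 < u < 1 -> m <= f u) -> m * (1 - u0) <= RiemannInt pr.
Proof.
  intros Hu H0 Hm.
  pose proof (RiemannInt_P22 pr Hu) as p1.
  pose proof (RiemannInt_P23 pr Hu) as p2.
  rewrite <- (RiemannInt_P26 p1 p2 pr).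
  assert (A1 : RiemannInt (RiemannInt_P14 0 u0 0) <= RiemannInt p1).
  { apply RiemannInt_P19; [lra|]. intros x Hx. unfold fct_cte. apply H0; lra. }
  assert (A2 : RiemannInt (RiemannInt_P14 u0 1 m) <= RiemannInt p2).
  { apply RiemannInt_P19; [lra|]. intros x Hx. unfold fct_cte. apply Hm; lra. }
  rewrite RiemannInt_P15 in A1, A2. lra.
Qed.

Lemma int_upper f (pr : Riemann_integrable f 0 1) u1 m :
  0 <= u1 <= 1 -> (forall u, 0 < u < u1 -> f u <= 0) ->
  (forall u, u1 < u < 1 -> f u <= m) -> RiemannInt pr <= m * (1 - u1).
Proof.
  intros Hu H0 Hm.
  pose proof (RiemannInt_P22 pr Hu) as p1.
  pose proof (RiemannInt_P23 pr Hu) as p2.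
  rewrite <- (RiemannInt_P26 p1 p2 pr).
  assert (A1 : RiemannInt p1 <= RiemannInt (RiemannInt_P14 0 u1 0)).
  { apply RiemannInt_P19; [lra|]. intros x Hx. unfold fct_cte. apply H0; lra. }
  assert (A2 : RiemannInt p2 <= RiemannInt (RiemannInt_P14 u1 1 m)).
  { apply RiemannInt_P19; [lra|]. intros x Hx. unfold fct_cte. apply Hm; lra. }
  rewrite RiemannInt_P15 in A1, A2. lra.
Qed.

Lemma F_nonneg F : nonneg_cdf F -> forall x, 0 <= F x.
Proof.
  intros [Hm [H0 _]] x. destruct (Rle_lt_dec x (-1)).
  - rewrite H0; lra.
  - rewrite <- (H0 (-1)) by lra. apply Hm; lra.
Qed.

Lemma F_zero F : nonneg_cdf F -> F 0 = 0.
Proof.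
  intros HF. pose proof (F_nonneg F HF 0).
  destruct HF as [Hm [H0 [_ [Hc _]]]].
  destruct (Req_dec (F 0) 0) as [e|n]; auto.
  destruct (Hc 0 (F 0 / 2)) as [d [Hd Hd']]; [lra|].
  specialize (Hd' (- d / 2)).
  assert (D_x (no_cond) 0 (-d/2) /\ R_dist (-d/2) 0 < d) as HH.
  { split. split. exact I. lra. unfold R_dist. rewrite Rabs_left; lra. }
  specialize (Hd' HH). simpl in Hd'. unfold R_dist in Hd'.
  rewrite H0 in Hd' by lra. rewrite Rabs_left in Hd'; lra.
Qed.

Lemma Finv_pos F Finv : nonneg_cdf F -> is_cdf_inverse F Finv ->
  forall u, 0 < u < 1 -> 0 < Finv u.
Proof.
  intros HF HI u Hu. pose proof (HI u Hu) as E.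
  destruct (Rlt_le_dec 0 (Finv u)) as [p|p]; auto.
  exfalso. pose proof (F_zero F HF) as Z. destruct HF as [Hm _].
  pose proof (Hm _ _ p). lra.
Qed.

Lemma pa_bounds lam A SNR x : 0 < A * SNR ->
  0 <= power_alloc lam A SNR x <= A * SNR.
Proof.
  intros H. unfold power_alloc, pos_part.
  pose proof (Rmax_l 0 (/lam - /x)).
  split.
  - apply Rmin_glb; lra.
  - apply Rmin_r.
Qed.

Lemma pa_zero lam A SNR x : 0 < A * SNR -> 0 < x -> x <= lam ->
  power_alloc lam A SNR x = 0.
Proof.
  intros H Hx Hl. unfold power_alloc, pos_part.
  assert (/lam <= /x) by (apply Rinv_le_contravar; lra).
  rewrite Rmax_left by lra. rewrite Rmin_left; lra.
Qed.

Lemma pa_full lam A SNR x x0 : 0 < A * SNR -> 0 < x0 -> x0 <= x ->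
  / lam - / x0 = A * SNR -> power_alloc lam A SNR x = A * SNR.
Proof.
  intros H Hx Hl E. unfold power_alloc, pos_part.
  assert (/x <= /x0) by (apply Rinv_le_contravar; lra).
  rewrite Rmax_right by lra. rewrite Rmin_right; lra.
Qed.

Lemma part1 F Finv A (HF : nonneg_cdf F) (HFinv : is_cdf_inverse F Finv) (HA : 1 < A) :
  forall SNR lam, 0 < SNR -> is_multiplier Finv A SNR lam ->
     Finv (1 - / A) / (1 + A * SNR * Finv (1 - / A)) <= lam /\
     lam <= Finv (1 - / A).
Proof.
  intros SNR lam HS [Hl [HlA [pr Hpr]]].
  assert (HiA : 0 < / A < 1).
  { split. apply Rinv_0_lt_compat; lra.
    rewrite <- Rinv_1. apply Rinv_lt_contravar; lra. }
  set (c := Finv (1 - / A)).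
  assert (Hu : 0 < 1 - / A < 1) by lra.
  assert (Hc : 0 < c) by (apply (Finv_pos F); auto).
  assert (HFc : F c = 1 - / A) by (apply HFinv; auto).
  assert (HAS : 0 < A * SNR) by (apply Rmult_lt_0_compat; lra).
  assert (HAinv : A * SNR * (/ A) = SNR) by (field; lra).
  pose proof (F_nonneg F HF) as Fnn.
  pose proof (Finv_pos F Finv HF HFinv) as Fpos.
  destruct HF as [Fm [F0 [Finf [Fc Fs]]]].
  split.
  - assert (Key : / lam - / c <= A * SNR).
    { destruct (Rle_lt_dec (/ lam - / c) (A * SNR)) as [h|h]; auto.
      exfalso.
      assert (Hp : 0 < / lam - A * SNR).
      { assert (lam * (A * SNR) < 1) by lra.
        assert (A * SNR < / lam).
        { apply (Rmult_lt_reg_l lam); auto. rewrite Rinv_r; lra. }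
        lra. }
      set (x0 := / (/ lam - A * SNR)).
      assert (Hx0 : 0 < x0) by (apply Rinv_0_lt_compat; auto).
      assert (Ex0 : / lam - / x0 = A * SNR) by (unfold x0; rewrite Rinv_inv; lra).
      assert (Hx0c : x0 < c).
      { assert (/ c < / x0) by lra.
        destruct (Rlt_le_dec x0 c); auto.
        assert (/ c <= / x0 -> False) by (intros; assert (/x0 <= /c) by (apply Rinv_le_contravar; lra); lra).
        assert (/ x0 <= / c) by (apply Rinv_le_contravar; lra). lra. }
      set (u0 := F x0).
      assert (Hu0 : u0 < 1 - / A).
      { rewrite <- HFc. apply Fs; auto. lra.
        pose proof (Fm _ _ (Rlt_le _ _ Hx0c)). unfold u0; lra. }
      pose proof (Fnn x0).
      assert (Hint := int_lower _ pr u0 (A * SNR)).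
      assert (A * SNR * (1 - u0) <= RiemannInt pr).
      { apply Hint.
        - unfold u0 in *; lra.
        - intros u Hu'. apply pa_bounds; auto.
        - intros u Hu'. right. symmetry. apply (pa_full _ _ _ _ x0); auto.
          destruct (Rle_lt_dec x0 (Finv u)) as [q|q]; auto.
          exfalso. pose proof (Fm _ _ (Rlt_le _ _ q)).
          rewrite HFinv in H0 by (unfold u0 in *; lra). unfold u0 in *; lra. }
      assert (A * SNR * / A < A * SNR * (1 - u0)).
      { apply Rmult_lt_compat_l; lra. }
      lra. }
    assert (c - lam <= A * SNR * lam * c).
    { assert (lam * c * (/ lam - / c) <= lam * c * (A * SNR)).
      { apply Rmult_le_compat_l; auto. apply Rmult_le_pos; lra. }
      replace (lam * c * (/ lam - / c)) with (c - lam) in H by (field; lra).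
      lra. }
    assert (0 < 1 + A * SNR * c).
    { assert (0 < A * SNR * c) by (apply Rmult_lt_0_compat; lra). lra. }
    unfold Rdiv. apply (Rmult_le_reg_r (1 + A * SNR * c)); auto.
    rewrite Rmult_assoc, Rinv_l by lra. lra.
  - destruct (Rle_lt_dec lam c) as [h|h]; auto. exfalso.
    assert (HFl : 1 - / A < F lam).
    { rewrite <- HFc. apply Fs; auto. pose proof (Fm _ _ (Rlt_le _ _ h)). lra. lra. }
    set (u1 := Rmin (F lam) 1).
    assert (Hu1 : 1 - / A < u1).
    { unfold u1. apply Rmin_glb_lt; lra. }
    assert (Hint := int_upper _ pr u1 (A * SNR)).
    assert (RiemannInt pr <= A * SNR * (1 - u1)).
    { apply Hint.
      - split. lra. apply Rmin_r.
      - intros u Hu'. right.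
        assert (u1 <= 1) by apply Rmin_r.
        apply pa_zero; auto.
        { apply Fpos. split; lra. }
        destruct (Rle_lt_dec (Finv u) lam) as [q|q]; auto.
        exfalso. pose proof (Fm _ _ (Rlt_le _ _ q)) as Hq.
        assert (u < F lam) by (pose proof (Rmin_l (F lam) 1); unfold u1 in *; lra).
        rewrite HFinv in Hq by lra. lra.
      - intros u Hu'. apply pa_bounds; auto. }
    assert (A * SNR * (1 - u1) < A * SNR * / A).
    { apply Rmult_lt_compat_l; lra. }
    lra.
Qed.

Theorem lemma2 (F Finv : R -> R) (A : R)
  (HF : nonneg_cdf F) (HFinv : is_cdf_inverse F Finv) (HA : 1 < A) :
  (* (1) bounds, for every SNR > 0 and its multiplier lam *)
  (forall SNR lam, 0 < SNR -> is_multiplier Finv A SNR lam ->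
     Finv (1 - / A) / (1 + A * SNR * Finv (1 - / A)) <= lam /\
     lam <= Finv (1 - / A)) /\
  (* (2),(3) asymptotics as SNR -> 0, lam = lamf SNR *)
  (forall (lamf : R -> R) (s0 : R), 0 < s0 ->
     (forall SNR, 0 < SNR < s0 -> is_multiplier Finv A SNR (lamf SNR)) ->
     lim_0_right lamf (Finv (1 - / A)) /\
     (forall n : R, 0 < n ->
        lim_0_right (fun SNR => Rpower (lamf SNR) n * SNR) 0)).
Proof.
  pose proof (part1 F Finv A HF HFinv HA) as P1.
  split; [exact P1|].
  intros lamf s0 Hs0 Hm.
  assert (HiA : 0 < / A < 1).
  { split. apply Rinv_0_lt_compat; lra.
    rewrite <- Rinv_1. apply Rinv_lt_contravar; lra. }
  set (c := Finv (1 - / A)) in *.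
  assert (Hc : 0 < c) by (apply (Finv_pos F); auto; lra).
  split.
  - intros eps Heps.
    set (K := A * c * c + 1).
    assert (HK : 0 < K) by (unfold K; assert (0 < A * c * c) by (repeat apply Rmult_lt_0_compat; lra); lra).
    exists (Rmin s0 (eps / K)). split.
    { apply Rmin_glb_lt; auto. apply Rdiv_lt_0_compat; auto. }
    intros s Hs.
    assert (Hs1 : s < s0) by (pose proof (Rmin_l s0 (eps/K)); lra).
    assert (Hs2 : s < eps / K) by (pose proof (Rmin_r s0 (eps/K)); lra).
    destruct (Hm s) as [Hl _]; [lra|].
    destruct (P1 s (lamf s)) as [L U]; [lra|apply Hm; lra|].
    assert (D : 0 < 1 + A * s * c) by (assert (0 < A * s * c) by (repeat apply Rmult_lt_0_compat; lra); lra).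
    assert (E : c - c / (1 + A * s * c) = A * s * c * c / (1 + A * s * c)) by (field; lra).
    assert (E2 : A * s * c * c / (1 + A * s * c) <= A * s * c * c).
    { unfold Rdiv. rewrite <- (Rmult_1_r (A * s * c * c)) at 2.
      apply Rmult_le_compat_l. assert (0 < A * s * c * c) by (repeat apply Rmult_lt_0_compat; lra); lra.
      rewrite <- Rinv_1. apply Rinv_le_contravar; [lra|].
      assert (0 < A * s * c) by (repeat apply Rmult_lt_0_compat; lra); lra. }
    assert (s * K < eps).
    { apply (Rmult_lt_compat_r K) in Hs2; auto. unfold Rdiv in Hs2.
      rewrite Rmult_assoc, Rinv_l in Hs2 by lra. lra. }
    rewrite Rabs_left1 by lra. unfold K in *. nra.
  - intros n Hn eps Heps.
    set (K := Rpower c n).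
    assert (HK : 0 < K) by (unfold K, Rpower; apply exp_pos).
    exists (Rmin s0 (eps / K)). split.
    { apply Rmin_glb_lt; auto. apply Rdiv_lt_0_compat; auto. }
    intros s Hs.
    assert (Hs1 : s < s0) by (pose proof (Rmin_l s0 (eps/K)); lra).
    assert (Hs2 : s < eps / K) by (pose proof (Rmin_r s0 (eps/K)); lra).
    destruct (Hm s) as [Hl _]; [lra|].
    destruct (P1 s (lamf s)) as [L U]; [lra|apply Hm; lra|].
    assert (Hp : 0 < Rpower (lamf s) n) by (unfold Rpower; apply exp_pos).
    assert (Hle : Rpower (lamf s) n <= K) by (apply Rle_Rpower_l; lra).
    assert (s * K < eps).
    { apply (Rmult_lt_compat_r K) in Hs2; auto. unfold Rdiv in Hs2.
      rewrite Rmult_assoc, Rinv_l in Hs2 by lra. lra. }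
    rewrite Rminus_0_r, Rabs_right.
    + nra.
    + apply Rle_ge, Rmult_le_pos; lra.
Qed.
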